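(* The population size of Global SEMO (with fitness $f(x)=(Cost(x),LP(x))$) on the weighted vertex cover problem is at all times upper bounded by $2\cdot OPT+1$.
   Context: Weighted vertex cover: $G=(V,E)$, $V=\{v_1,\dots,v_n\}$, $w:V\to\mathbb{N}^+$; $OPT$ is the minimum weight of a vertex cover. Search points $x\in\{0,1\}^n$; $Cost(x)=\sum_i w(v_i)x_i$; $G(x)$ is $G$ with selected vertices and edges having a selected endpoint removed; $LP(x)$ is the optimal value of: minimize $\sum_{v_i\in V(x)}w(v_i)y_i$ s.t. $y_i+y_j\ge1$ for edges $\{v_i,v_j\}$ of $G(x)$, $0\le y_i\le1$. $f(x)\le f(y)$ means componentwise $\le$. Global SEMO: start with a uniformly random $x$, $P=\{x\}$; each iteration choose $x\in P$ uniformly at random, create $x'$ by flipping each bit independently with probability $1/n$; if no $y\in P$ has $f(y)\le f(x')$, add $x'$ to $P$ and delete all other $z\in P$ with $f(x')\le f(z)$. *)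

(* Defs.v *)
From HB Require Import structures.
From mathcomp Require Import all_boot all_order all_algebra.
From mathcomp Require Import classical_sets reals.
Set Implicit Arguments. Unset Strict Implicit. Unset Printing Implicit Defensive.
Import Order.TTheory GRing.Theory Num.Theory.

(* Search points x : {ffun 'I_n -> bool}, x i = true iff v_i is selected. *)

Section WVC.
Variables (n : nat) (e : rel 'I_n) (w : 'I_n -> nat).

Definition bits := {ffun 'I_n -> bool}.

Definition Cost (x : bits) : nat := \sum_(i < n) w i * x i.

Definition is_vertex_cover (x : bits) : Prop :=
  forall i j, e i j -> x i || x j.

Definition is_vertex_coverb (x : bits) : bool :=
  [forall i, forall j, e i j ==> (x i || x j)].

(* OPT = minimum weight of a vertex cover (the all-ones vector is a cover,
   so its cost is a valid seed for the minimum). *)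
Definition OPT : nat :=
  \big[minn/Cost [ffun=> true]]_(x : bits | is_vertex_coverb x) Cost x.

Local Open Scope ring_scope.
Local Open Scope classical_set_scope.

(* Feasible solutions of the LP relaxation on G(x): variables y_i for the
   unselected vertices, 0 <= y_i <= 1, y_i + y_j >= 1 for every edge of G(x)
   (both endpoints unselected). *)
Definition LP_feasible {R : realType} (x : bits) (y : 'I_n -> R) : Prop :=
  (forall i, ~~ x i -> 0 <= y i <= 1) /\
  (forall i j, e i j -> ~~ x i -> ~~ x j -> 1 <= y i + y j).

Definition LP_obj {R : realType} (x : bits) (y : 'I_n -> R) : R :=
  \sum_(i < n | ~~ x i) (w i)%:R * y i.

(* LP(x) = optimal value (infimum, which is attained) of the LP. *)
Definition LP {R : realType} (x : bits) : R :=
  inf [set LP_obj x y | y in [set y | LP_feasible x y]].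

Definition fle {R : realType} (a b : bits) : bool :=
  (Cost a <= Cost b)%N && (@LP R a <= @LP R b).

Definition semo_update {R : realType} (P : {set bits}) (x' : bits) : {set bits} :=
  if [exists y in P, @fle R y x'] then P
  else x' |: [set z in P | ~~ @fle R x' z].

(* Standard bit mutation with rate 1/n gives every offspring x' positive
   probability, so any x' may be produced from the selected parent. *)
Inductive reachable {R : realType} : {set bits} -> Prop :=
| reach_init (x : bits) : reachable [set x]
| reach_step (P : {set bits}) (x x' : bits) :
    reachable P -> x \in P -> reachable (@semo_update R P x').

End WVC.

(* Main.v *)
Require Import Defs.
From HB Require Import structures.
From mathcomp Require Import all_boot all_order all_algebra.
From mathcomp Require Import classical_sets reals.
From mathcomp Require Import ring lra zify.
From Stdlib Require Import Classical.
Set Implicit Arguments. Unset Strict Implicit. Unset Printing Implicit Defensive.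
Import Order.TTheory GRing.Theory Num.Theory.

Local Open Scope ring_scope.

Lemma inf_eq_min {R : realType} (S : set R) m :
  S m -> (forall s, S s -> m <= s) -> inf S = m.
Proof.
move=> Sm lb; apply/eqP; rewrite eq_le; apply/andP; split.
  by apply: ge_inf => //; exists m.
by apply: lb_le_inf => //; exists m.
Qed.

Lemma seq_min {R : realType} (L : seq R) : L != [::] ->
  exists2 m, m \in L & forall u, u \in L -> m <= u.
Proof.
elim: L => // a [|b L] IH _.
  by exists a; rewrite ?mem_seq1 // => u; rewrite mem_seq1 => /eqP->.
have [m mL mmin] := IH isT.
have [am|ma] := leP a m.
  exists a; first by rewrite mem_head.
  move=> u; rewrite in_cons => /orP[/eqP->//|/mmin]; exact: le_trans.
exists m; first by rewrite in_cons mL orbT.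
move=> u; rewrite in_cons => /orP[/eqP->|/mmin//]; exact: ltW.
Qed.

Lemma nat_min (P : nat -> Prop) : (exists k, P k) ->
  exists k, P k /\ forall j, P j -> (k <= j)%N.
Proof.
move=> [k Pk]; elim: k {-2}k (leqnn k) Pk => [|N IH] k hk Pk.
  exists k; split => // j _; move: hk; rewrite leqn0 => /eqP->//.
destruct (classic (exists j, P j /\ (j < k)%N)) as [[j [Pj hj]]|nj].
  apply: (IH j) => //; lia.
exists k; split => // j Pj; rewrite leqNgt; apply/negP => hj; apply: nj; by exists j.
Qed.

Lemma size_lt_rem {T : eqType} (s1 s2 : seq T) c : uniq s1 -> uniq s2 ->
  {subset s1 <= s2} -> c \in s2 -> c \notin s1 -> (size s1 < size s2)%N.
Proof.
move=> u1 u2 sub cs2 cs1.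
have: (size s1 <= size (rem c s2))%N.
  apply: uniq_leq_size => // x xs1; rewrite mem_rem_uniq // inE sub // andbT.
  by apply/eqP=> xc; move: xs1; rewrite xc (negbTE cs1).
by rewrite size_rem //; case: s2 cs2 {u2 sub} => // a s _ /=; rewrite ltnS.
Qed.
Local Open Scope ring_scope.

Definition hf (R : realType) : R := 2^-1.

Lemma hfE (R : realType) : hf R + hf R = 1 /\ 0 < hf R /\ hf R < 1.
Proof. rewrite /hf; split; [|split]; lra. Qed.

Section Red.
Variables (R : realType) (n : nat) (e : rel 'I_n) (w : 'I_n -> nat) (x : bits n).
Local Notation feas := (@LP_feasible n e R x).
Local Notation obj := (@LP_obj n w R x).
Local Notation h := (hf R).

Definition dist (v : R) := if v <= h then v else 1 - v.
Definition bad (v : R) := [&& 0 < v, v < 1 & v != h].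
Definition levels (y : 'I_n -> R) :=
  undup [seq dist (y i) | i <- enum 'I_n & ~~ x i && bad (y i)].

Lemma mem_levels y u :
  reflect (exists i, [/\ ~~ x i, bad (y i) & u = dist (y i)]) (u \in levels y).
Proof.
rewrite mem_undup; apply: (iffP mapP) => [[i]|[i [xi bi ->]]].
  by rewrite mem_filter mem_enum andbT => /andP[xi bi] ->; exists i.
by exists i => //; rewrite mem_filter mem_enum xi bi.
Qed.

Lemma bad_dist v : bad v -> 0 < dist v < h.
Proof.
have [hh [h0 h1]] := hfE R.
case/and3P => v0 v1; rewrite neq_lt => /orP[vh|vh]; rewrite /dist.
  rewrite ifT ?ltW //; apply/andP; split => //.
rewrite ifF; last by apply/negbTE; rewrite -ltNge.
apply/andP; split; lra.
Qed.

Lemma good v : 0 <= v <= 1 -> ~~ bad v -> v = 0 \/ v = h \/ v = 1.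
Proof.
case/andP; rewrite le_eqVlt => /orP[/eqP<-|v0]; first by left.
rewrite le_eqVlt => /orP[/eqP->|v1]; first by right; right.
rewrite /bad v0 v1 /= negbK => /eqP->; by right; left.
Qed.

Lemma step y : feas y -> levels y != [::] ->
  exists y', [/\ feas y', obj y' <= obj y & (size (levels y') < size (levels y))%N].
Proof.
move=> [fb fe] Ln0.
have [hh [h0 h1]] := hfE R.
have [c cL cmin] := seq_min Ln0.
have [c0 ch] : 0 < c /\ c < h.
  by case/mem_levels: cL => i [_ /bad_dist /andP[? ?] ->].
pose L' := h :: [seq u <- levels y | c < u].
have [c' c'L c'min] := seq_min (isT : L' != [::]).
have c'h : c' <= h by apply: c'min; rewrite mem_head.
have c'P : c' = h \/ (c < c' /\ c' \in levels y).
  move: c'L; rewrite in_cons => /orP[/eqP->|]; first by left.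
  by rewrite mem_filter => /andP[? ?]; right.
have cc' : c < c' by case: c'P => [->|[]].
have c'lb : forall i, ~~ x i -> bad (y i) -> dist (y i) != c -> c' <= dist (y i).
  move=> i xi bi dc; apply: c'min; rewrite in_cons mem_filter.
  have dL : dist (y i) \in levels y by apply/mem_levels; exists i.
  by rewrite dL andbT lt_neqAle (eq_sym c) dc cmin ?orbT.
pose ys (s : R) i := if ~~ x i && bad (y i) && (dist (y i) == c)
  then (if y i <= h then s else 1 - s) else y i.
have cls : forall i s, ~~ x i ->
  (ys s i = y i /\ (y i = 0 \/ y i = h \/ y i = 1 \/ (c' <= y i /\ y i < h)
      \/ (h < y i /\ y i <= 1 - c')))
  \/ (y i = c /\ ys s i = s) \/ (y i = 1 - c /\ ys s i = 1 - s).
  move=> i s xi; rewrite /ys; case: ifP => [/andP[/andP[_ bi] /eqP di] | nb].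
    move: di; rewrite /dist; case: ifP => yh di; right; [left|right]; split => //; lra.
  left; split => //.
  have [/andP[y0 y1]] := fb i xi.
  case bi: (bad (y i)); last by have := good (fb i xi) (negbT bi); tauto.
  have dc : dist (y i) != c by apply/negP => dc0; move: nb; rewrite xi bi dc0.
  have := c'lb i xi bi dc; move: bi; rewrite /bad /dist => /and3P[_ _].
  rewrite neq_lt => /orP[yh|yh].
    by rewrite ifT; [move=> ?; do 3 right; left; split | exact: ltW].
  rewrite ifF; last by apply/negbTE; rewrite -ltNge.
  move=> ?; do 4 right; split => //; lra.
have feasS : forall s, 0 <= s <= c' -> feas (ys s).
  move=> s /andP[s0 sc']; split.
    move=> i xi; have [/andP[y0 y1]] := fb i xi.
    case: (cls i s xi) => [[-> H]|[[H ->]|[H ->]]]; apply/andP; split;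
      repeat match goal with H : _ \/ _ |- _ => destruct H end;
      repeat match goal with H : _ /\ _ |- _ => destruct H end; lra.
  move=> i j eij xi xj; have := fe i j eij xi xj.
  have [/andP[yi0 yi1]] := fb i xi; have [/andP[yj0 yj1]] := fb j xj.
  move: (cls i s xi) (cls j s xj) => Ci Cj Hij.
  repeat match goal with H : _ \/ _ |- _ => destruct H end;
  repeat match goal with H : _ /\ _ |- _ => destruct H end; lra.
have c'0 : 0 < c' by apply: lt_trans c0 cc'.
pose l := c / c'.
have hl : l * c' = c by rewrite /l divfK // gt_eqF.
have l0 : 0 < l by rewrite divr_gt0.
have l1 : l <= 1 by rewrite /l ler_pdivrMr // mul1r ltW.
have pt : forall i, y i = (1 - l) * ys 0 i + l * ys c' i.
  move=> i; rewrite /ys; case: ifP => [/andP[/andP[_ _] /eqP di]|_]; last by ring.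
  case: ifP => yh; move: di; rewrite /dist yh => di.
    by rewrite di mulr0 add0r hl.
  rewrite subr0 mulr1 mulrBr mulr1 hl; lra.
have oy : obj y = (1 - l) * obj (ys 0) + l * obj (ys c').
  rewrite /LP_obj !mulr_sumr -big_split /=; apply: eq_bigr => i _; rewrite pt; ring.
have [s [s01 sc' os]] : exists s, [/\ s = 0 \/ s = c', 0 <= s <= c' & obj (ys s) <= obj y].
  case: (leP (obj (ys 0)) (obj y)) => H0.
    by exists 0; split; [left | rewrite lexx /=; apply: ltW | ].
  exists c'; split; [by right | by rewrite lexx andbT; apply: ltW | ].
  rewrite leNgt; apply/negP => H1.
  have a : 0 <= (1 - l) * (obj (ys 0) - obj y) by apply: mulr_ge0; rewrite subr_ge0 // ltW.
  have b : 0 < l * (obj (ys c') - obj y) by apply: mulr_gt0; rewrite // subr_gt0.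
  have E : (1 - l) * (obj (ys 0) - obj y) + l * (obj (ys c') - obj y) = 0.
    by rewrite oy; ring.
  lra.
exists (ys s); split => //; first exact: feasS.
have sub : forall u, u \in levels (ys s) -> u \in levels y /\ u != c.
  move=> u /mem_levels [i [xi bi ->]].
  move: bi; rewrite /ys xi /=; case: ifP => [/andP[bi0 /eqP di]|nb] bi.
    have ds : dist (if y i <= h then s else 1 - s) = s.
      case: ifP => _; rewrite /dist; case: leP => H //; move: sc' => /andP[? ?]; lra.
    rewrite ds; case: s01 => s0.
      by move: bi; rewrite s0; case: ifP => _; rewrite /bad ?subr0 ltxx ?andbF.
    case: c'P => [c'hh|[cc'' c'lv]].
      move: bi; rewrite s0 c'hh; have -> : 1 - h = h by lra.
      by rewrite if_same /bad eqxx !andbF.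
    by rewrite s0 c'lv gt_eqF.
  move: nb; rewrite bi /= => /negbT dc; split => //.
  by apply/mem_levels; exists i.
apply: (size_lt_rem (c := c)); try exact: undup_uniq.
- by move=> u /sub[].
- exact: cL.
- by apply/negP => /sub[_]; rewrite eqxx.
Qed.

Lemma reduce y : feas y ->
  exists y', [/\ feas y', obj y' <= obj y & forall i, ~~ x i -> ~~ bad (y' i)].
Proof.
move: {2}(size (levels y)) (leqnn (size (levels y))) => N.
elim: N y => [|N IH] y hN fy; case Ln: (levels y == [::]).
- exists y; split=> // i xi; apply/negP => bi.
  have : dist (y i) \in levels y by apply/mem_levels; exists i.
  by rewrite (eqP Ln).
- by move: hN; rewrite leqn0 size_eq0 Ln.
- exists y; split=> // i xi; apply/negP => bi.
  have : dist (y i) \in levels y by apply/mem_levels; exists i.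
  by rewrite (eqP Ln).
- have [y1 [f1 o1 s1]] := step fy (negbT Ln).
  have [y2 [f2 o2 b2]] := IH y1 (leq_trans s1 hN) f1.
  by exists y2; split => //; apply: le_trans o1.
Qed.

Lemma half y : feas y -> (forall i, ~~ x i -> ~~ bad (y i)) ->
  exists k : nat, obj y = k%:R / 2.
Proof.
move=> [fb _] nb; have [hh [h0 h1]] := hfE R.
pose t i := if y i == 0 then 0%N else if y i == h then 1%N else 2%N.
exists (\sum_(i < n | ~~ x i) w i * t i)%N.
rewrite natr_sum mulr_suml /LP_obj; apply: eq_bigr => i xi.
rewrite natrM /t; have := good (fb i xi) (nb i xi) => [[->|[->|->]]].
- by rewrite eqxx /= mulr0 mul0r.
- rewrite (gt_eqF h0) eqxx /hf; lra.
- rewrite oner_eq0 (gt_eqF h1); lra.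
Qed.

End Red.

Lemma LP_val (R : realType) n (e : rel 'I_n) (w : 'I_n -> nat) (x : bits n) :
  exists k : nat, @LP n e w R x = k%:R / 2 /\
    (forall y : 'I_n -> R, LP_feasible e x y -> k%:R / 2 <= LP_obj w x y).
Proof.
pose P k := exists y : 'I_n -> R, @LP_feasible n e R x y /\ LP_obj w x y = k%:R / 2.
have hP : forall y : 'I_n -> R, LP_feasible e x y -> exists k, P k /\ k%:R / 2 <= LP_obj w x y.
  move=> y fy; have [y' [f' o' b']] := reduce w fy.
  have [k hk] := @half R n e w x y' f' b'.
  by exists k; split; [exists y' | rewrite -hk].
have y1f : @LP_feasible n e R x (fun _ => 1).
  by split => *; [rewrite ler01 lexx | lra].
have [k0 [Pk0 _]] := hP _ y1f.
have [k [Pk kmin]] := nat_min (ex_intro _ k0 Pk0).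
have lb : forall y : 'I_n -> R, LP_feasible e x y -> k%:R / 2 <= LP_obj w x y.
  move=> y fy; have [k' [Pk' le']] := hP y fy.
  have := kmin _ Pk'; rewrite -(ler_nat R) => kk'; lra.
exists k; split => //; apply: inf_eq_min.
  by case: Pk => y [fy oy]; exists y.
by move=> s [y fy <-]; apply: lb.
Qed.

Lemma OPT_cover n (e : rel 'I_n) (w : 'I_n -> nat) :
  exists c, is_vertex_coverb e c /\ OPT e w = Cost w c.
Proof.
rewrite /OPT; apply: (big_ind (fun v => exists c, is_vertex_coverb e c /\ v = Cost w c)).
- exists [ffun=> true]; split => //; apply/forallP => i; apply/forallP => j.
  by rewrite !ffunE implybT.
- move=> a b [ca [ha ->]] [cb [hb ->]]; rewrite /minn; case: ifP => _.
    by exists ca.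
  by exists cb.
- by move=> c hc; exists c.
Qed.

Lemma LP_le_cover (R : realType) n (e : rel 'I_n) (w : 'I_n -> nat) (x c : bits n) :
  is_vertex_coverb e c -> @LP n e w R x <= (Cost w c)%:R.
Proof.
move=> cov; have [k [-> lb]] := LP_val R e w x.
pose y i : R := (c i : nat)%:R.
have fy : LP_feasible e x y.
  split.
    by move=> i _; rewrite /y; case: (c i); rewrite /= ?lexx ?ler01.
  move=> i j eij _ _; have := implyP (forallP (forallP cov i) j) eij.
  by rewrite /y; case: (c i); case: (c j) => //= _; lra.
apply: le_trans (lb y fy) _.
rewrite /LP_obj /Cost natr_sum (bigID (fun i => ~~ x i) predT) /=.
rewrite -[X in X <= _]addr0; apply: lerD.
  by apply: ler_sum => i _; rewrite natrM.
by apply: sumr_ge0.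
Qed.

Lemma LP_half_bound (R : realType) n (e : rel 'I_n) (w : 'I_n -> nat) (x : bits n) :
  exists k : nat, (@LP n e w R x == k%:R / 2) && (k <= 2 * OPT e w)%N.
Proof.
have [k [hk _]] := LP_val R e w x.
have [c [cc oc]] := OPT_cover e w.
have := LP_le_cover R w x cc; rewrite hk -oc => h.
exists k; rewrite eqxx /=.
have : (k%:R : R) <= (2 * OPT e w)%:R by rewrite natrM; lra.
by rewrite ler_nat.
Qed.

Lemma inv_pop (R : realType) n (e : rel 'I_n) (w : 'I_n -> nat) (P : {set bits n}) :
  @reachable n e w R P -> forall a b, a \in P -> b \in P -> a != b -> ~~ @fle n e w R a b.
Proof.
elim => [x0|P0 x x' _ IH _] a b.
  by rewrite !inE => /eqP-> /eqP->; rewrite eqxx.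
rewrite /semo_update; case: ifP => [_|/negbT ne]; first exact: IH.
rewrite !inE => /orP[/eqP->|/andP[aP na]] /orP[/eqP->|/andP[bP nb]] //.
- by rewrite eqxx.
- move=> _; apply/negP => f; move/negP: ne; apply; apply/existsP; exists a.
  by rewrite aP f.
- exact: IH.
Qed.

Theorem lemma3 (R : realType) (n : nat) (e : rel 'I_n) (w : 'I_n -> nat)
  (e_sym : symmetric e) (e_irr : irreflexive e) (w_pos : forall i, (0 < w i)%N)
  (P : {set bits n}) :
  @reachable n e w R P -> (#|P| <= 2 * OPT e w + 1)%N.
Proof.
move=> rP; have Hinv := inv_pop rP.
pose g (x : bits n) := xchoose (LP_half_bound R e w x).
have gP : forall x, (@LP n e w R x == (g x)%:R / 2) && (g x <= 2 * OPT e w)%N.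
  by move=> x; apply: (xchooseP (LP_half_bound R e w x)).
pose f (x : bits n) : 'I_(2 * OPT e w).+1 := inord (g x).
have finj : {in P &, injective f}.
  move=> a b aP bP fab.
  have gab : g a = g b.
    have ha : (g a < (2 * OPT e w).+1)%N by rewrite ltnS; case/andP: (gP a).
    have hb : (g b < (2 * OPT e w).+1)%N by rewrite ltnS; case/andP: (gP b).
    by have := congr1 val fab; rewrite /f /= !inordK.
  have Lab : @LP n e w R a = @LP n e w R b.
    by case/andP: (gP a) => /eqP-> _; case/andP: (gP b) => /eqP-> _; rewrite gab.
  apply/eqP; apply: contraT => nab.
  case: (leqP (Cost w a) (Cost w b)) => hc.
    have := Hinv a b aP bP nab; by rewrite /fle hc Lab lexx.
  have := Hinv b a bP aP; rewrite eq_sym => /(_ nab).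
  by rewrite /fle (ltnW hc) Lab lexx.
rewrite -(card_in_imset finj) addn1.
by apply: leq_trans (max_card _) _; rewrite card_ord.
Qed.
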